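(* Let $\lambda(x):=u(x)/u'(x)$ for $x\ge 0$, and assume $\lambda$ is continuously differentiable. In the first-price auction model with $n\ge 2$ bidders described in the context, the symmetric equilibrium bidding strategy $\beta_n$ satisfies, for all $v\in(\underline v,\overline v]$, the differential equation $$\frac{u[v-\beta_n(v)]}{u'[v-\beta_n(v)]}=\frac{D[F_0(v)]}{D'[F_0(v)]}\cdot\frac{\beta_n'(v)}{(n-1)f_0(v)},$$ together with the boundary conditions $\beta_n(\underline v)=\underline v$ and $$\beta_n'(\underline v)=\frac{(n-1)\lambda'(0)}{(n-1)\lambda'(0)+1}.$$
   Context: An indivisible object is sold by a first-price auction without reserve price to $n\ge2$ bidders; the highest bidder wins and pays her bid. Bidder values $v_1,\dots,v_n$ are i.i.d. from a distribution $F_0$ on $[\underline v,\overline v]$ with continuous density $f_0>0$. All bidders have the same utility $u:\mathbb R_+\to\mathbb R_+$ with $u'>0$, $u''\le 0$, $u(0)=0$; the winner with value $v$ and bid $b$ gets $u(v-b)$, losers get $u(0)=0$. Bidders do not know $F_0$; they have maxmin expected utility with respect to a (commonly known) weakly compact convex set $\Gamma$ of strictly increasing, continuously differentiable distribution functions on $[\underline v,\overline v]$ containing $F_0$, which has a least element $F^*\in\Gamma$ (i.e. $F^*(v)\le F(v)$ for all $F\in\Gamma$ and all $v$) with density $f^*>0$. Define $D:[0,1]\to[0,1]$ by $D(\gamma):=F^*(F_0^{-1}(\gamma))$, so $D[F_0(v)]=F^*(v)=\min_{F\in\Gamma}F(v)$; $D$ is continuously differentiable, strictly increasing, $D(0)=0$,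 $D(1)=1$, $D(\gamma)\le\gamma$, $D'(0)>0$. A symmetric (pure-strategy Bayesian Nash) equilibrium is a strictly increasing, differentiable $\beta_n:[\underline v,\overline v]\to\mathbb R$ such that, for every $v$, $x=v$ maximizes $\min_{F\in\Gamma} u[v-\beta_n(x)]F(x)^{n-1}=u[v-\beta_n(x)]\,D[F_0(x)]^{n-1}$. *)

(* Defs.v *)
From Stdlib Require Import Reals Lra.
Open Scope R_scope.

Definition deriv_within (P : R -> Prop) (f : R -> R) (x l : R) : Prop :=
  forall eps, 0 < eps -> exists delta, 0 < delta /\
    forall y, P y -> y <> x -> Rabs (y - x) < delta ->
      Rabs ((f y - f x) / (y - x) - l) < eps.

Definition cont_within (P : R -> Prop) (g : R -> R) (x : R) : Prop :=
  forall eps, 0 < eps -> exists delta, 0 < delta /\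
    forall y, P y -> Rabs (y - x) < delta -> Rabs (g y - g x) < eps.

Definition nonneg_dom (x : R) : Prop := 0 <= x.
Definition Icc (a b : R) (x : R) : Prop := a <= x <= b.

(* Symmetric equilibrium in the (already reduced) maxmin form of the paper:
   for every value v, reporting x = v maximizes u[v - beta x] * D[F0 x]^(n-1)
   over all types x whose bid is feasible (v - beta x >= 0, the domain of u). *)
Definition sym_equilibrium (n : nat) (vl vh : R) (u F0 D beta : R -> R) : Prop :=
  forall v, Icc vl vh v ->
    0 <= v - beta v /\
    forall x, Icc vl vh x -> beta x <= v ->
      u (v - beta x) * (D (F0 x)) ^ (n - 1)
        <= u (v - beta v) * (D (F0 v)) ^ (n - 1).

(* Main.v *)
Require Import Defs.
From Stdlib Require Import Reals Lra Classical Lia.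
Open Scope R_scope.

Lemma dw_lim P f x l : deriv_within P f x l <->
  limit1_in (fun y => (f y - f x)/(y - x)) (fun y => P y /\ y <> x) l x.
Proof.
  unfold deriv_within, limit1_in, limit_in; simpl; unfold R_dist; split.
  - intros H eps He; destruct (H eps He) as [d [Hd H']]; exists d; split; [lra|].
    intros y [[Py Hy] Hd2]; apply H'; auto.
  - intros H eps He; destruct (H eps He) as [d [Hd H']]; exists d; split; [lra|].
    intros y Py Hy Hd2; apply H'; auto.
Qed.

Lemma cw_lim P g x : cont_within P g x <-> limit1_in g P (g x) x.
Proof.
  unfold cont_within, limit1_in, limit_in; simpl; unfold R_dist; split.
  - intros H eps He; destruct (H eps He) as [d [Hd H']]; exists d; split; [lra|].
    intros y [Py Hd2]; apply H'; auto.
  - intros H eps He; destruct (H eps He) as [d [Hd H']]; exists d; split; [lra|].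
    intros y Py Hd2; apply H'; auto.
Qed.

Lemma lim_ext f g D l x : (forall y, D y -> f y = g y) -> limit1_in f D l x -> limit1_in g D l x.
Proof.
  unfold limit1_in, limit_in; intros E H eps He; destruct (H eps He) as [d [Hd H']];
  exists d; split; auto; intros y [Dy Hy]; rewrite <- E; auto.
Qed.

Lemma lim_restr f D D' l x : (forall y, D' y -> D y) -> limit1_in f D l x -> limit1_in f D' l x.
Proof.
  unfold limit1_in, limit_in; intros E H eps He; destruct (H eps He) as [d [Hd H']];
  exists d; split; auto; intros y [Dy Hy]; apply H'; auto.
Qed.

Lemma lim_const c D x : limit1_in (fun _ => c) D c x.
Proof.
  unfold limit1_in, limit_in; intros eps He; exists 1; split; [lra|]; intros; simpl; unfold R_dist.
  replace (c - c) with 0 by ring; rewrite Rabs_R0; lra.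
Qed.

Lemma lim_id D x : limit1_in (fun y => y) D x x.
Proof.
  unfold limit1_in, limit_in; intros eps He; exists eps; split; [lra|]; intros y [_ H]; exact H.
Qed.

Lemma dw_eqv P f x l l' : l = l' -> deriv_within P f x l -> deriv_within P f x l'.
Proof. intros ->; auto. Qed.

Lemma dw_restr P Q f x l : (forall y, Q y -> P y) -> deriv_within P f x l -> deriv_within Q f x l.
Proof. unfold deriv_within; intros E H eps He; destruct (H eps He) as [d [Hd H']];
  exists d; split; auto. Qed.

Lemma dw_ext P f g x l : (forall y, P y -> f y = g y) -> P x -> deriv_within P f x l -> deriv_within P g x l.
Proof. unfold deriv_within; intros E Px H eps He; destruct (H eps He) as [d [Hd H']];
  exists d; split; auto; intros y Py Hy Hd2; rewrite <- !E; auto. Qed.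

Lemma dw_cont P f x l : deriv_within P f x l -> cont_within P f x.
Proof.
  intros H. apply dw_lim in H.
  assert (H2 : limit1_in (fun y => (f y - f x)/(y - x) * (y - x)) (fun y => P y /\ y <> x) (l * (x - x)) x).
  { apply limit_mul; auto. apply limit_minus; [apply lim_id| apply lim_const]. }
  replace (l * (x - x)) with 0 in H2 by ring.
  intros eps He; destruct (H2 eps He) as [d [Hd H']]; exists d; split; auto.
  intros y Py Hy. destruct (Req_dec y x) as [->|Hne].
  - replace (f x - f x) with 0 by ring; rewrite Rabs_R0; lra.
  - specialize (H' y (conj (conj Py Hne) Hy)); simpl in H'; unfold R_dist in H'.
    replace ((f y - f x) / (y - x) * (y - x) - 0) with (f y - f x) in H'; auto.
    field; lra.
Qed.

Lemma dw_const P c x : deriv_within P (fun _ => c) x 0.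
Proof. intros eps He; exists 1; split; [lra|]; intros.
  replace ((c - c) / (y - x) - 0) with 0 by (field; lra); rewrite Rabs_R0; lra. Qed.

Lemma dw_id P x : deriv_within P (fun y => y) x 1.
Proof. intros eps He; exists 1; split; [lra|]; intros.
  replace ((y - x) / (y - x) - 1) with 0 by (field; lra); rewrite Rabs_R0; lra. Qed.

Lemma dw_plus P f g x l1 l2 : deriv_within P f x l1 -> deriv_within P g x l2 ->
  deriv_within P (fun y => f y + g y) x (l1 + l2).
Proof.
  intros H1 H2; apply dw_lim in H1; apply dw_lim in H2; apply dw_lim.
  eapply lim_ext; [|apply limit_plus; [exact H1|exact H2]].
  intros y [_ Hy]; simpl; field; lra.
Qed.

Lemma dw_minus P f g x l1 l2 : deriv_within P f x l1 -> deriv_within P g x l2 ->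
  deriv_within P (fun y => f y - g y) x (l1 - l2).
Proof.
  intros H1 H2; apply dw_lim in H1; apply dw_lim in H2; apply dw_lim.
  eapply lim_ext; [|apply limit_minus; [exact H1|exact H2]].
  intros y [_ Hy]; simpl; field; lra.
Qed.

Lemma dw_mult P f g x l1 l2 : deriv_within P f x l1 -> deriv_within P g x l2 ->
  deriv_within P (fun y => f y * g y) x (l1 * g x + f x * l2).
Proof.
  intros H1 H2. pose proof (dw_cont _ _ _ _ H2) as Cg. apply cw_lim in Cg.
  apply dw_lim in H1; apply dw_lim in H2; apply dw_lim.
  eapply lim_ext; [|apply limit_plus; [apply limit_mul; [exact H1| eapply lim_restr; [|exact Cg]]
    | apply limit_mul; [apply lim_const|exact H2]]].
  - intros y [_ Hy]; simpl; field; lra.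
  - intros y [Py _]; exact Py.
Qed.

Lemma dw_pow P f x l k : deriv_within P f x l ->
  deriv_within P (fun y => f y ^ S k) x (INR (S k) * f x ^ k * l).
Proof.
  intros H; induction k.
  - eapply dw_eqv; [|apply (dw_mult _ _ _ _ _ _ H (dw_const P 1 x))]. simpl; ring.
  - eapply dw_eqv; [|apply (dw_mult _ _ _ _ _ _ H IHk)].
    rewrite !S_INR; simpl; ring.
Qed.

Lemma dw_chain P Q f g x l1 l2 : deriv_within P g x l1 -> deriv_within Q f (g x) l2 ->
  (forall y, P y -> Q (g y)) -> deriv_within P (fun y => f (g y)) x (l2 * l1).
Proof.
  intros Hg Hf HPQ.
  pose proof (dw_cont _ _ _ _ Hg) as Cg. apply cw_lim in Cg.
  set (Qf := fun z => if Req_EM_T z (g x) then l2 else (f z - f (g x)) / (z - g x)).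
  assert (HQ : limit1_in Qf Q l2 (g x)).
  { intros eps He; destruct (Hf eps He) as [d [Hd H']]; exists d; split; [lra|].
    intros z [Qz Hz]; simpl in *; unfold R_dist in *; unfold Qf.
    destruct (Req_EM_T z (g x)) as [E|E].
    - replace (l2 - l2) with 0 by ring; rewrite Rabs_R0; lra.
    - apply H'; auto. }
  apply dw_lim in Hg; apply dw_lim.
  assert (Hc := limit_comp g Qf (fun y => P y /\ y <> x) Q (g x) l2 x
                  (lim_restr _ _ _ _ _ (fun y (H : P y /\ y <> x) => proj1 H) Cg) HQ).
  eapply lim_ext; [|apply limit_mul; [eapply lim_restr; [|exact Hc]|exact Hg]].
  - intros y [Py Hy]. unfold Qf. destruct (Req_EM_T (g y) (g x)) as [E|E].
    + rewrite E. replace (f (g x) - f (g x)) with 0 by ring.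
      replace (g x - g x) with 0 by ring. field; lra.
    + field; split; lra.
  - intros y [Py Hy]. split; [split; auto| apply HPQ; auto].
Qed.

Lemma loc_sign P f s l : deriv_within P f s l -> 0 < l ->
  exists d, 0 < d /\ forall w, P w -> w <> s -> Rabs (w - s) < d -> 0 < (f w - f s) / (w - s).
Proof.
  intros H Hl; destruct (H l Hl) as [d [Hd H']]; exists d; split; auto.
  intros w Pw Hw Hd2; specialize (H' w Pw Hw Hd2).
  apply Rabs_def2 in H'; lra.
Qed.

Lemma div_pos_sign a b : 0 < a / b -> (0 < b -> 0 < a) /\ (b < 0 -> a < 0).
Proof.
  intros H; split; intros Hb.
  - replace a with (a / b * b) by (field; lra); apply Rmult_lt_0_compat; lra.
  - replace a with (- (a / b * (- b))) by (field; lra).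
    assert (0 < a / b * - b) by (apply Rmult_lt_0_compat; lra); lra.
Qed.

Lemma incr_core f df a b : a < b ->
  (forall x, Icc a b x -> deriv_within (Icc a b) f x (df x)) ->
  (forall x, Icc a b x -> 0 < df x) -> f a < f b.
Proof.
  intros Hab Hd Hp.
  set (E := fun z => a <= z <= b /\ forall w, a <= w <= z -> f a <= f w).
  assert (Eb : bound E) by (exists b; intros z [Hz _]; lra).
  assert (Ea : exists x, E x) by (exists a; split; [lra|]; intros w Hw; replace w with a by lra; lra).
  destruct (completeness E Eb Ea) as [s [Hub Hlub]].
  assert (Has : a <= s) by (apply Hub; destruct Ea; unfold E; split; [lra|]; intros w Hw; replace w with a by lra; lra).
  assert (Hsb : s <= b) by (apply Hlub; intros z [Hz _]; lra).
  assert (C1 : forall w, a <= w < s -> f a <= f w).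
  { intros w Hw. apply NNPP; intro Hn.
    assert (s <= w); [|lra]. apply Hlub. intros z Ez. destruct (Rle_lt_dec z w); auto.
    exfalso; apply Hn. destruct Ez as [_ Ez]; apply Ez; lra. }
  assert (Ss : Icc a b s) by (split; lra).
  destruct (loc_sign _ _ _ _ (Hd s Ss) (Hp s Ss)) as [d [Hd0 Hloc]].
  assert (C2 : f a <= f s).
  { destruct (Req_dec s a) as [->|Hne]; [lra|].
    set (w := s - Rmin d (s - a) / 2).
    assert (Hm1 : Rmin d (s - a) <= d) by apply Rmin_l.
    assert (Hm2 : Rmin d (s - a) <= s - a) by apply Rmin_r.
    assert (Hm3 : 0 < Rmin d (s - a)) by (apply Rmin_glb_lt; lra).
    assert (Hw : f w < f s).
    { assert (0 < (f w - f s) / (w - s)).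
      { apply Hloc; unfold w, Icc; try lra. rewrite Rabs_left; lra. }
      apply div_pos_sign in H; unfold w in *; lra. }
    assert (f a <= f w) by (apply C1; unfold w; lra). lra. }
  assert (C3 : s = b).
  { destruct (Req_dec s b) as [|Hne]; auto. exfalso.
    set (z := s + Rmin d (b - s) / 2).
    assert (Hm1 : Rmin d (b - s) <= d) by apply Rmin_l.
    assert (Hm2 : Rmin d (b - s) <= b - s) by apply Rmin_r.
    assert (Hm3 : 0 < Rmin d (b - s)) by (apply Rmin_glb_lt; lra).
    assert (E z).
    { split; [unfold z; lra|]. intros w Hw.
      destruct (Rlt_le_dec w s); [apply C1; lra|].
      destruct (Req_dec w s) as [->|Hne2]; auto.
      assert (0 < (f w - f s) / (w - s)).
      { apply Hloc; unfold Icc, z in *; try lra. rewrite Rabs_right; lra. }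
      apply div_pos_sign in H; lra. }
    apply Hub in H; unfold z in H; lra. }
  subst s.
  set (w := b - Rmin d (b - a) / 2).
  assert (Hm1 : Rmin d (b - a) <= d) by apply Rmin_l.
  assert (Hm2 : Rmin d (b - a) <= b - a) by apply Rmin_r.
  assert (Hm3 : 0 < Rmin d (b - a)) by (apply Rmin_glb_lt; lra).
  assert (Hw : f w < f b).
  { assert (0 < (f w - f b) / (w - b)).
    { apply Hloc; unfold w, Icc; try lra. rewrite Rabs_left; lra. }
    apply div_pos_sign in H; unfold w in *; lra. }
  assert (f a <= f w) by (apply C1; unfold w; lra). lra.
Qed.

Lemma incr P f df a b :
  (forall x, Icc a b x -> P x) ->
  (forall x, Icc a b x -> deriv_within P f x (df x)) ->
  (forall x, Icc a b x -> 0 < df x) ->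
  forall x y, Icc a b x -> Icc a b y -> x < y -> f x < f y.
Proof.
  intros HP Hd Hp x y Hx Hy Hxy.
  apply (incr_core f df); auto.
  - intros z Hz; apply dw_restr with P; [intros w Hw; apply HP; unfold Icc in *; lra|].
    apply Hd; unfold Icc in *; lra.
  - intros z Hz; apply Hp; unfold Icc in *; lra.
Qed.

Lemma Rdiv_le_0_compat a b : 0 <= a -> 0 < b -> 0 <= a / b.
Proof. intros; unfold Rdiv; apply Rmult_le_pos; [lra|left; apply Rinv_0_lt_compat; lra]. Qed.

Lemma pick_left a t d : a < t -> 0 < d ->
  exists y, Icc a t y /\ y <> t /\ Rabs (y - t) < d /\ y < t.
Proof.
  intros H Hd. exists (t - Rmin d (t - a) / 2).
  assert (Hm1 : Rmin d (t - a) <= d) by apply Rmin_l.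
  assert (Hm2 : Rmin d (t - a) <= t - a) by apply Rmin_r.
  assert (Hm3 : 0 < Rmin d (t - a)) by (apply Rmin_glb_lt; lra).
  unfold Icc; repeat split; try lra. rewrite Rabs_left; lra.
Qed.

Lemma pick_right a t d : a < t -> 0 < d ->
  exists y, Icc a t y /\ y <> a /\ Rabs (y - a) < d /\ a < y.
Proof.
  intros H Hd. exists (a + Rmin d (t - a) / 2).
  assert (Hm1 : Rmin d (t - a) <= d) by apply Rmin_l.
  assert (Hm2 : Rmin d (t - a) <= t - a) by apply Rmin_r.
  assert (Hm3 : 0 < Rmin d (t - a)) by (apply Rmin_glb_lt; lra).
  unfold Icc; repeat split; try lra. rewrite Rabs_right; lra.
Qed.

Lemma signL a t h L : a < t -> deriv_within (Icc a t) h t L ->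
  (forall v, Icc a t v -> h v <= h t) -> 0 <= L.
Proof.
  intros Hat H Hle. apply Rnot_lt_le; intro HL.
  destruct (H (- L) ltac:(lra)) as [d [Hd H']].
  destruct (pick_left a t d Hat Hd) as [y [Hy [Hne [Hyd Hlt]]]].
  specialize (H' y Hy Hne Hyd). apply Rabs_def2 in H'.
  assert (0 <= (h y - h t) / (y - t)).
  { replace ((h y - h t) / (y - t)) with ((h t - h y) / (t - y)) by (field; lra).
    apply Rdiv_le_0_compat; [specialize (Hle y Hy); lra| lra]. }
  lra.
Qed.

Lemma signL' a t h L : a < t -> deriv_within (Icc a t) h t L ->
  (forall v, Icc a t v -> h t <= h v) -> L <= 0.
Proof.
  intros Hat H Hle. apply Rnot_lt_le; intro HL.
  destruct (H L HL) as [d [Hd H']].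
  destruct (pick_left a t d Hat Hd) as [y [Hy [Hne [Hyd Hlt]]]].
  specialize (H' y Hy Hne Hyd). apply Rabs_def2 in H'.
  assert (0 <= (h y - h t) / (t - y)) by (apply Rdiv_le_0_compat; [specialize (Hle y Hy); lra| lra]).
  replace ((h y - h t) / (y - t)) with (- ((h y - h t) / (t - y))) in H' by (field; lra).
  lra.
Qed.

Lemma signR0 h L : deriv_within nonneg_dom h 0 L -> (forall y, 0 <= y -> h 0 <= h y) -> 0 <= L.
Proof.
  intros H Hle. apply Rnot_lt_le; intro HL.
  destruct (H (- L) ltac:(lra)) as [d [Hd H']].
  destruct (pick_right 0 1 d ltac:(lra) Hd) as [y [Hy [Hne [Hyd Hlt]]]].
  assert (Py : nonneg_dom y) by (unfold nonneg_dom; lra).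
  specialize (H' y Py Hne Hyd). apply Rabs_def2 in H'.
  assert (0 <= (h y - h 0) / (y - 0)) by (apply Rdiv_le_0_compat; [specialize (Hle y (Rlt_le _ _ Hlt)); lra| lra]).
  lra.
Qed.

Lemma uniqL a t f l1 l2 : a < t -> deriv_within (Icc a t) f t l1 -> deriv_within (Icc a t) f t l2 -> l1 = l2.
Proof.
  intros Hat H1 H2. apply NNPP; intro Hn.
  assert (He : 0 < Rabs (l1 - l2) / 2) by (assert (0 < Rabs (l1 - l2)) by (apply Rabs_pos_lt; lra); lra).
  destruct (H1 _ He) as [d1 [Hd1 H1']]. destruct (H2 _ He) as [d2 [Hd2 H2']].
  destruct (pick_left a t (Rmin d1 d2) Hat ltac:(apply Rmin_glb_lt; lra)) as [y [Hy [Hne [Hyd Hlt]]]].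
  assert (Rmin d1 d2 <= d1) by apply Rmin_l. assert (Rmin d1 d2 <= d2) by apply Rmin_r.
  specialize (H1' y Hy Hne ltac:(lra)). specialize (H2' y Hy Hne ltac:(lra)).
  assert (Rabs (l1 - l2) <= Rabs ((f y - f t) / (y - t) - l2) + Rabs ((f y - f t) / (y - t) - l1)).
  { replace (l1 - l2) with (((f y - f t) / (y - t) - l2) - ((f y - f t) / (y - t) - l1)) by ring.
    eapply Rle_trans; [apply Rabs_triang|]. rewrite Rabs_Ropp; lra. }
  lra.
Qed.

Lemma dlim_le f df a c b L : a < c ->
  (forall w, a < w <= c -> deriv_within (Icc a c) f w (df w)) ->
  deriv_within (Icc a c) f a b ->
  limit1_in df (fun v => a < v <= c) L a -> b <= L.
Proof.
  intros Hac Hd Hb Hlim. apply Rnot_lt_le; intro HL.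
  set (e := (b - L) / 2).
  destruct (Hlim e ltac:(unfold e; lra)) as [d1 [Hd1 H1]].
  destruct (Hb e ltac:(unfold e; lra)) as [d2 [Hd2 H2]].
  destruct (pick_right a c (Rmin d1 d2) Hac ltac:(apply Rmin_glb_lt; lra)) as [v [Hv [Hne [Hvd Hlt]]]].
  assert (Rmin d1 d2 <= d1) by apply Rmin_l. assert (Rmin d1 d2 <= d2) by apply Rmin_r.
  specialize (H2 v Hv Hne ltac:(lra)). apply Rabs_def2 in H2.
  set (g := fun w => f w - (L + e) * w).
  assert (Hva : v - a < d1) by (rewrite Rabs_right in Hvd; lra).
  assert (Hdec : forall y, a < y < v -> g v < g y).
  { intros y Hy.
    assert (HH := incr (Icc a c) (fun w => - g w) (fun w => - (df w - (L + e) * 1)) y v).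
    assert (- g y < - g v); [|lra]. apply HH; try (unfold Icc; lra).
    - intros x Hx; unfold Icc in *; lra.
    - intros x Hx. apply dw_ext with (fun w => 0 - g w); [intros; unfold g; ring| unfold Icc in *; lra|].
      apply (dw_eqv _ _ _ (0 - (df x - (0 * x + (L + e) * 1)))); [ring|].
      apply dw_minus; [apply dw_const|].
      unfold g. apply dw_minus; [apply Hd; unfold Icc in *; lra|].
      apply (dw_mult _ (fun _ => L + e) (fun w => w)); [apply dw_const| apply dw_id].
    - intros x Hx. assert (Hx' : Icc a c x /\ dist R_met x a < d1).
      { unfold Icc in *; split; [lra|]. simpl; unfold R_dist; rewrite Rabs_right; lra. }
      specialize (H1 x ltac:(unfold Icc in *; split; [lra|exact (proj2 Hx')])).
      simpl in H1; unfold R_dist in H1; apply Rabs_def2 in H1. lra. }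
  assert (Hg : cont_within (Icc a c) g a).
  { apply dw_cont with (b - (L + e) * 1). unfold g. apply dw_minus; auto.
    apply (dw_eqv _ _ _ (0 * a + (L + e) * 1)); [ring|].
    apply (dw_mult _ (fun _ => L + e) (fun w => w)); [apply dw_const| apply dw_id]. }
  assert (Hga : g v <= g a).
  { apply Rnot_lt_le; intro Hn.
    destruct (Hg (g v - g a) ltac:(lra)) as [d3 [Hd3 H3]].
    destruct (pick_right a v d3 Hlt Hd3) as [y [Hy [Hne' [Hyd Hlt']]]].
    assert (y <> v \/ y = v) by (destruct (Req_dec y v); auto).
    destruct (Req_dec y v) as [->|Hyv].
    - specialize (H3 v Hv Hyd). apply Rabs_def2 in H3. lra.
    - assert (Hay : a < y < v) by (unfold Icc in Hy; lra).
      specialize (Hdec y Hay). specialize (H3 y ltac:(unfold Icc in *; lra) Hyd).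
      apply Rabs_def2 in H3. lra. }
  unfold g in Hga.
  assert ((f v - f a) / (v - a) <= L + e).
  { apply (Rmult_le_reg_r (v - a)); [lra|]. unfold Rdiv; rewrite Rmult_assoc, Rinv_l; lra. }
  unfold e in *; lra.
Qed.

Lemma dw_opp P f x l : deriv_within P f x l -> deriv_within P (fun y => - f y) x (- l).
Proof.
  intros H. assert (H2 := dw_minus P (fun _ => 0) f x 0 l (dw_const P 0 x) H).
  intros eps He; destruct (H2 eps He) as [d [Hd H']]; exists d; split; auto.
  intros y Py Hy Hyd; specialize (H' y Py Hy Hyd).
  replace ((- f y - - f x) / (y - x) - - l) with ((0 - f y - (0 - f x)) / (y - x) - (0 - l)) by (field; lra); auto.
Qed.

Lemma mono_le (P : R -> Prop) f : (forall x y, P x -> P y -> x < y -> f x < f y) ->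
  forall x y, P x -> P y -> x <= y -> f x <= f y.
Proof. intros H x y Px Py Hxy; destruct (Req_dec x y) as [->|]; [lra|]; left; apply H; auto; lra. Qed.
Theorem lemma1
  (n : nat) (vl vh : R)
  (u du ddu : R -> R) (dlam : R -> R)
  (F0 f0 Fs fs D dD : R -> R)
  (beta dbeta : R -> R)
  (* bidders and support *)
  (Hn : (2 <= n)%nat) (Hv : vl < vh)
  (* utility u : R_+ -> R_+, u' > 0, u'' <= 0, u(0) = 0 *)
  (Hu0 : u 0 = 0)
  (Hupos : forall x, 0 <= x -> 0 <= u x)
  (Hdu : forall x, 0 <= x -> deriv_within nonneg_dom u x (du x))
  (Hdupos : forall x, 0 <= x -> 0 < du x)
  (Hddu : forall x, 0 <= x -> deriv_within nonneg_dom du x (ddu x))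
  (Hddneg : forall x, 0 <= x -> ddu x <= 0)
  (* lambda = u/u' is continuously differentiable on R_+ *)
  (Hlam : forall x, 0 <= x -> deriv_within nonneg_dom (fun y => u y / du y) x (dlam x))
  (Hlamc : forall x, 0 <= x -> cont_within nonneg_dom dlam x)
  (* true distribution F0 on [vl,vh] with continuous density f0 > 0 *)
  (HF0l : F0 vl = 0) (HF0h : F0 vh = 1)
  (HF0 : forall v, Icc vl vh v -> deriv_within (Icc vl vh) F0 v (f0 v))
  (Hf0c : forall v, Icc vl vh v -> cont_within (Icc vl vh) f0 v)
  (Hf0pos : forall v, Icc vl vh v -> 0 < f0 v)
  (* least element F* of Gamma: C^1 distribution function with density > 0 *)
  (HFsl : Fs vl = 0) (HFsh : Fs vh = 1)
  (HFs : forall v, Icc vl vh v -> deriv_within (Icc vl vh) Fs v (fs v))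
  (Hfsc : forall v, Icc vl vh v -> cont_within (Icc vl vh) fs v)
  (Hfspos : forall v, Icc vl vh v -> 0 < fs v)
  (* D : [0,1] -> [0,1], D(F0 v) = F*(v), with its stated properties *)
  (HDdef : forall v, Icc vl vh v -> D (F0 v) = Fs v)
  (HD : forall g, Icc 0 1 g -> deriv_within (Icc 0 1) D g (dD g))
  (HdDc : forall g, Icc 0 1 g -> cont_within (Icc 0 1) dD g)
  (HDinc : forall g h, Icc 0 1 g -> Icc 0 1 h -> g < h -> D g < D h)
  (HD0 : D 0 = 0) (HD1 : D 1 = 1)
  (HDle : forall g, Icc 0 1 g -> D g <= g)
  (HdD0 : 0 < dD 0)
  (* beta : strictly increasing, differentiable symmetric equilibrium *)
  (Hbinc : forall x y, Icc vl vh x -> Icc vl vh y -> x < y -> beta x < beta y)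
  (Hbd : forall v, Icc vl vh v -> deriv_within (Icc vl vh) beta v (dbeta v))
  (Heq : sym_equilibrium n vl vh u F0 D beta) :
  (forall v, vl < v <= vh ->
     u (v - beta v) / du (v - beta v)
       = D (F0 v) / dD (F0 v) * (dbeta v / ((INR n - 1) * f0 v)))
  /\ beta vl = vl
  /\ dbeta vl = (INR n - 1) * dlam 0 / ((INR n - 1) * dlam 0 + 1).
Proof.
  destruct n as [|[|m]]; [lia|lia|]. clear Hn.
  replace (INR (S (S m)) - 1) with (INR (S m)) by (rewrite (S_INR (S m)); ring).
  unfold sym_equilibrium in Heq.
  replace (S (S m) - 1)%nat with (S m) in Heq by lia.
  assert (HSm : 0 < INR (S m)) by (apply lt_0_INR; lia).
  assert (upos : forall c, 0 < c -> 0 < u c).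
  { intros c Hc. assert (u 0 < u c); [|lra].
    apply (incr nonneg_dom u du 0 c); unfold Icc, nonneg_dom; try lra.
    - intros x Hx; lra.
    - intros x Hx; apply Hdu; lra.
    - intros x Hx; apply Hdupos; lra. }
  assert (F0inc := incr (Icc vl vh) F0 f0 vl vh (fun x H => H) HF0 Hf0pos).
  assert (F0rng : forall x, Icc vl vh x -> Icc 0 1 (F0 x)).
  { intros x Hx. rewrite <- HF0l, <- HF0h. unfold Icc in *. split;
    apply (mono_le (Icc vl vh)); auto; unfold Icc; lra. }
  assert (Fsinc := incr (Icc vl vh) Fs fs vl vh (fun x H => H) HFs Hfspos).
  assert (Fspos : forall x, vl < x <= vh -> 0 < Fs x).
  { intros x Hx; rewrite <- HFsl; apply Fsinc; unfold Icc; lra. }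
  assert (bmono := mono_le (Icc vl vh) beta Hbinc).
  assert (Ivl : Icc vl vh vl) by (unfold Icc; lra).
  assert (Ivh : Icc vl vh vh) by (unfold Icc; lra).
  assert (S1 : beta vl = vl).
  { destruct (Heq vl Ivl) as [H0 Hmax].
    destruct (Req_dec (beta vl) vl) as [|Hne]; auto. exfalso.
    assert (Cb := dw_cont _ _ _ _ (Hbd vl Ivl)).
    destruct (Cb (vl - beta vl) ltac:(lra)) as [d [Hd Hc]].
    destruct (pick_right vl vh d Hv Hd) as [y [Hy [Hne' [Hyd Hlt]]]].
    specialize (Hc y Hy Hyd). apply Rabs_def2 in Hc.
    specialize (Hmax y Hy ltac:(lra)).
    rewrite HF0l, HD0, pow_i in Hmax by lia. rewrite Rmult_0_r in Hmax.
    rewrite HDdef in Hmax by auto.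
    assert (0 < u (vl - beta y) * Fs y ^ S m); [|lra].
    apply Rmult_lt_0_compat; [apply upos; lra| apply pow_lt, Fspos; unfold Icc in Hy; lra]. }
  assert (S2 : forall t, vl < t <= vh -> beta t < t).
  { intros t Ht. assert (It : Icc vl vh t) by (unfold Icc; lra).
    destruct (Heq t It) as [H0 Hmax].
    destruct (Req_dec (beta t) t) as [Heqt|]; [|lra]. exfalso.
    set (x := (vl + t) / 2).
    assert (Ix : Icc vl vh x) by (unfold Icc, x; lra).
    assert (beta x < beta t) by (apply Hbinc; auto; unfold x; lra).
    specialize (Hmax x Ix ltac:(lra)).
    rewrite Heqt, Rminus_diag, Hu0, Rmult_0_l in Hmax.
    rewrite HDdef in Hmax by auto.
    assert (0 < u (t - beta x) * Fs x ^ S m); [|lra].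
    apply Rmult_lt_0_compat; [apply upos; lra| apply pow_lt, Fspos; unfold x; lra]. }

  assert (S3 : forall t, vl < t <= vh ->
     fs t = dD (F0 t) * f0 t /\
     INR (S m) * fs t * (u (t - beta t) / du (t - beta t)) = dbeta t * Fs t).
  { intros t Ht. assert (It : Icc vl vh t) by (unfold Icc; lra).
    assert (Hbt := S2 t Ht).
    assert (Hvb : vl <= beta t) by (rewrite <- S1; apply bmono; auto; lra).
    assert (Hc : 0 < t - beta t) by lra.
    assert (KI : forall y, Icc (beta t) t y -> Icc vl vh y) by (intros y Hy; unfold Icc in *; lra).
    assert (Kt : Icc (beta t) t t) by (unfold Icc; lra).
    assert (dB : deriv_within (Icc (beta t) t) beta t (dbeta t)) by (apply dw_restr with (Icc vl vh); auto).
    assert (dG : deriv_within (Icc (beta t) t) (fun v => Fs v ^ S m) t (INR (S m) * Fs t ^ m * fs t)).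
    { apply dw_pow; apply dw_restr with (Icc vl vh); auto. }
    assert (du_c : deriv_within nonneg_dom u (t - beta t) (du (t - beta t))) by (apply Hdu; lra).
    set (psi := u (t - beta t) * (INR (S m) * Fs t ^ m * fs t) - du (t - beta t) * dbeta t * Fs t ^ S m).
    assert (HA : 0 <= psi).
    { assert (dA : deriv_within (Icc (beta t) t) (fun v => u (t - beta v) * Fs v ^ S m) t psi).
      { apply (dw_eqv _ _ _ (du (t - beta t) * (0 - dbeta t) * Fs t ^ S m + u (t - beta t) * (INR (S m) * Fs t ^ m * fs t))).
        { unfold psi; ring. }
        apply (dw_mult _ (fun v => u (t - beta v)) (fun v => Fs v ^ S m)); auto.
        apply (dw_chain (Icc (beta t) t) nonneg_dom u (fun v => t - beta v)); auto.
        - apply dw_minus; [apply dw_const| auto].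
        - intros y Hy; unfold nonneg_dom. assert (beta y <= beta t) by (apply bmono; auto; unfold Icc in Hy; lra). lra. }
      apply (signL (beta t) t (fun v => u (t - beta v) * Fs v ^ S m) psi); auto.
      intros v Hvv. destruct (Heq t It) as [_ Hmax].
      assert (beta v <= beta t) by (apply bmono; auto; unfold Icc in Hvv; lra).
      specialize (Hmax v (KI v Hvv) ltac:(lra)). rewrite !HDdef in Hmax; auto. }
    assert (HB : psi <= 0).
    { assert (dBB : deriv_within (Icc (beta t) t)
         (fun v => u (v - beta v) * Fs v ^ S m - u (v - beta t) * Fs t ^ S m) t psi).
      { apply (dw_eqv _ _ _ ((du (t - beta t) * (1 - dbeta t) * Fs t ^ S m + u (t - beta t) * (INR (S m) * Fs t ^ m * fs t))
                            - (du (t - beta t) * (1 - 0) * Fs t ^ S m + u (t - beta t) * 0))).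
        { unfold psi; ring. }
        apply dw_minus.
        - apply (dw_mult _ (fun v => u (v - beta v)) (fun v => Fs v ^ S m)); auto.
          apply (dw_chain (Icc (beta t) t) nonneg_dom u (fun v => v - beta v)); auto.
          + apply dw_minus; [apply dw_id| auto].
          + intros y Hy; unfold nonneg_dom. apply (proj1 (Heq y (KI y Hy))).
        - apply (dw_mult _ (fun v => u (v - beta t)) (fun _ => Fs t ^ S m)); [|apply dw_const].
          apply (dw_chain (Icc (beta t) t) nonneg_dom u (fun v => v - beta t)); auto.
          + apply dw_minus; [apply dw_id| apply dw_const].
          + intros y Hy; unfold nonneg_dom, Icc in *; lra. }
      apply (signL' (beta t) t (fun v => u (v - beta v) * Fs v ^ S m - u (v - beta t) * Fs t ^ S m) psi); auto.
      intros v Hvv. destruct (Heq v (KI v Hvv)) as [_ Hmax].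
      specialize (Hmax t It ltac:(unfold Icc in *; lra)). rewrite !HDdef in Hmax; auto.
      ring_simplify. ring_simplify in Hmax. lra. }
    assert (Hfs : fs t = dD (F0 t) * f0 t).
    { apply (uniqL vl t Fs); [lra| |].
      - apply dw_restr with (Icc vl vh); auto; intros y Hy; unfold Icc in *; lra.
      - apply dw_ext with (fun v => D (F0 v)); [intros y Hy; apply HDdef; unfold Icc in *; lra| unfold Icc; lra|].
        apply (dw_chain (Icc vl t) (Icc 0 1) D F0).
        + apply dw_restr with (Icc vl vh); auto; intros y Hy; unfold Icc in *; lra.
        + apply HD; auto.
        + intros y Hy; apply F0rng; unfold Icc in *; lra. }
    split; auto.
    assert (Hp0 : psi = 0) by lra. unfold psi in Hp0.
    assert (HFm : 0 < Fs t ^ m) by (apply pow_lt, Fspos; auto).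
    assert (Hduc : 0 < du (t - beta t)) by (apply Hdupos; lra).
    apply (Rmult_eq_reg_l (Fs t ^ m * du (t - beta t))); [|apply Rgt_not_eq, Rmult_lt_0_compat; lra].
    replace (Fs t ^ m * du (t - beta t) * (INR (S m) * fs t * (u (t - beta t) / du (t - beta t))))
      with (u (t - beta t) * (INR (S m) * Fs t ^ m * fs t)) by (field; lra).
    apply Rminus_diag_uniq; rewrite <- Hp0; simpl; ring. }

  split.
  { intros v Hv'. destruct (S3 v Hv') as [Hfs Hode].
    assert (Iv : Icc vl vh v) by (unfold Icc; lra).
    assert (Hf0 : 0 < f0 v) by auto. assert (Hfsv : 0 < fs v) by auto.
    assert (HdD : dD (F0 v) <> 0).
    { intro Z. rewrite Z in Hfs. lra. }
    rewrite HDdef by auto. rewrite Hfs in Hode.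
    assert (Hduv : 0 < du (v - beta v)) by (apply Hdupos; apply (proj1 (Heq v Iv))).
    replace (Fs v / dD (F0 v) * (dbeta v / (INR (S m) * f0 v)))
      with (dbeta v * Fs v / (INR (S m) * dD (F0 v) * f0 v)) by (field; repeat split; lra).
    rewrite <- Hode. field; repeat split; lra. }
  split; [exact S1|].
  set (k := fun v => u (v - beta v) / du (v - beta v)).
  assert (Hk : deriv_within (Icc vl vh) k vl (dlam 0 * (1 - dbeta vl))).
  { unfold k. apply (dw_chain (Icc vl vh) nonneg_dom (fun y => u y / du y) (fun v => v - beta v)).
    - apply dw_minus; [apply dw_id| apply Hbd; auto].
    - rewrite S1, Rminus_diag. apply Hlam; lra.
    - intros y Hy; apply (proj1 (Heq y Hy)). }
  assert (Hdl0 : 0 <= dlam 0).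
  { apply (signR0 (fun y => u y / du y)); [apply Hlam; lra|].
    intros y Hy. rewrite Hu0. unfold Rdiv at 1. rewrite Rmult_0_l.
    apply Rdiv_le_0_compat; [apply Hupos| apply Hdupos]; lra. }
  assert (Hk0 : k vl = 0) by (unfold k; rewrite S1, Rminus_diag, Hu0; unfold Rdiv; ring).
  assert (HDm : forall v, vl < v <= vh -> Icc vl vh v /\ v <> vl) by (intros v Hvv; unfold Icc; split; lra).
  assert (L1 : limit1_in (fun v => (k v - k vl) / (v - vl)) (fun v => vl < v <= vh) (dlam 0 * (1 - dbeta vl)) vl).
  { apply dw_lim in Hk. eapply lim_restr; [|exact Hk]. exact HDm. }
  assert (L2 : limit1_in (fun v => (Fs v - Fs vl) / (v - vl)) (fun v => vl < v <= vh) (fs vl) vl).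
  { assert (H := HFs vl Ivl). apply dw_lim in H. eapply lim_restr; [|exact H]. exact HDm. }
  assert (L3 : limit1_in fs (fun v => vl < v <= vh) (fs vl) vl).
  { assert (H := Hfsc vl Ivl). apply cw_lim in H. eapply lim_restr; [|exact H].
    intros y Hy; apply HDm; auto. }
  assert (Hfsl : 0 < fs vl) by auto.
  set (L := INR (S m) * fs vl * (dlam 0 * (1 - dbeta vl)) * / fs vl).
  assert (Lim : limit1_in dbeta (fun v => vl < v <= vh) L vl).
  { eapply lim_ext; [|apply limit_mul; [apply limit_mul; [apply limit_mul; [apply lim_const|exact L3]|exact L1]
       | apply limit_inv; [exact L2| lra]]].
    intros v Hvv. cbv beta. rewrite Hk0, HFsl.
    destruct (S3 v Hvv) as [_ Hode]. fold (k v) in Hode.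
    assert (0 < Fs v) by auto.
    replace (INR (S m) * fs v * ((k v - 0) / (v - vl)) * / ((Fs v - 0) / (v - vl)))
      with (INR (S m) * fs v * k v / Fs v) by (field; lra).
    rewrite Hode. field; lra. }
  assert (Hd1 : forall w, vl < w <= vh -> deriv_within (Icc vl vh) beta w (dbeta w)).
  { intros w Hw; apply Hbd; unfold Icc; lra. }
  assert (Hle : dbeta vl <= L) by (apply (dlim_le beta dbeta vl vh); auto).
  assert (Hge : - dbeta vl <= - L).
  { apply (dlim_le (fun w => - beta w) (fun w => - dbeta w) vl vh); auto.
    - intros w Hw; apply dw_opp; auto.
    - apply dw_opp; auto.
    - apply limit_Ropp; auto. }
  assert (E : dbeta vl = INR (S m) * dlam 0 * (1 - dbeta vl)).
  { transitivity L; [lra|]. unfold L; field; lra. }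
  assert (HX : 0 <= INR (S m) * dlam 0) by (apply Rmult_le_pos; lra).
  assert (E2 : dbeta vl * (INR (S m) * dlam 0 + 1) = INR (S m) * dlam 0) by nra.
  assert (Hpos : INR (S m) * dlam 0 + 1 <> 0) by lra.
  apply (Rmult_eq_reg_r (INR (S m) * dlam 0 + 1)); [|exact Hpos].
  rewrite E2. field. exact Hpos.
Qed.
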